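(* Let $p\ge 1711$ be a prime such that $-1$ is a quadratic residue modulo $p$ and $2,3$ are quadratic non-residues modulo $p$. Let $R'=R\setminus\{\tfrac{p+3}{2},\tfrac{p-3}{2}\}$ (elements of $\mathbb{F}_p$, i.e. $R'=R\setminus\{3/2,-3/2\}$). Let $\vec D$ be the digraph with vertex set $R'$ whose edges are: for every triple $x,y,z\in R'$ with $2x=y+z\neq 3$, the edges $(x,y)$ and $(x,z)$; and for every pair $y\neq z$ in $R'$ with $y+z=3$, the edges $(1,y)$ and $(1,z)$. Then $\vec D$ is strongly connected. Equivalently, the system of inequalities in variables $(x_a)_{a\in R'}$ $$2x_a\le x_b+x_c\ \ (a,b,c\in R',\ 2a=b+c\neq3),\qquad 3x_1\le x_b+x_c\ \ (b,c\in R',\ b+c=3),\qquad x_a>0\ \ (a\in R')$$ is strongly connected in the sense that its associated digraph (edges from the left-hand index to each right-hand index of every inequality) is strongly connected.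
   Context: $R$ denotes the set of nonzero quadratic residues in $\mathbb{F}_p$ (note $1\in R'$). All arithmetic is in $\mathbb{F}_p$. *)

(* Defs.v *)
From HB Require Import structures.
From mathcomp Require Import all_boot all_order all_algebra.
Unset Printing Implicit Defensive.
Import GRing.Theory.
Local Open Scope ring_scope.

Definition QR (p : nat) : {set 'F_p} :=
  [set x : 'F_p | (x != 0) && [exists y : 'F_p, y ^+ 2 == x]].

Definition Rp (p : nat) : {set 'F_p} :=
  QR p :\: [set (3%:R / 2%:R : 'F_p); - (3%:R / 2%:R)].

Definition Dedge (p : nat) : rel 'F_p := fun a b =>
  [&& a \in Rp p, b \in Rp p &
    [exists c : 'F_p,
      (c \in Rp p) &&
      (((2%:R * a == b + c) && (b + c != 3%:R))
       || [&& a == 1, c != b & b + c == 3%:R])]].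

Definition strongly_connected_D (p : nat) : Prop :=
  forall u v : 'F_p, u \in Rp p -> v \in Rp p -> connect (Dedge p) u v.

(* Main.v *)
Require Import Defs.
From HB Require Import structures.
From mathcomp Require Import all_boot all_order all_algebra all_field.
From mathcomp Require Import zify ring lra.
Local Open Scope ring_scope.
Import Order.TTheory GRing.Theory Num.Theory.

Lemma inv_id (K : fieldType) (c t : K) : t != 0 -> t^-1 * (t^-1 + c) = t^-1 * t^-1 * (c * t + 1).
Proof. by move=> t0; field. Qed.

Lemma cauchy_schwarz (I : finType) (X : {set I}) (T : I -> int) :
  (\sum_(x in X) T x) ^+ 2 <= #|X|%:Z * \sum_(x in X) T x ^+ 2.
Proof.
set n := #|X|%:Z; set S := \sum_(x in X) T x; set Q := \sum_(x in X) T x ^+ 2.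
have h : 0 <= \sum_(x in X) (n * T x - S) ^+ 2 by apply: sumr_ge0 => x _; exact: sqr_ge0.
have e : \sum_(x in X) (n * T x - S) ^+ 2 = n * (n * Q - S ^+ 2).
  rewrite (eq_bigr (fun x => n ^+ 2 * T x ^+ 2 - (2 * n * S) * T x + S ^+ 2)); last first.
    by move=> x _; ring.
  rewrite big_split /= sumrB -!mulr_sumr sumr_const -/S -/Q.
  rewrite /n -[_ *+ _]mulr_natr; ring.
rewrite e in h.
have n0 : 0 <= n by [].
case: (ltrgt0P n) => [np|//|n0'].
- by rewrite -subr_ge0; rewrite pmulr_rge0 // in h.
- rewrite n0' mul0r.
  have : X = set0 by apply/eqP; rewrite -cards_eq0; apply/eqP; move: n0'; rewrite /n; case: #|X|.
  by move=> eX; rewrite /S eX big_set0 expr0n.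
Qed.

Section Chi.
Variable p : nat.
Hypothesis hp : prime p.
Hypothesis hp5 : (5 <= p)%N.
Local Notation F := ('F_p).
Definition kk := (p.-1)./2.

Lemma cardF : #|F| = p. Proof. exact: card_Fp. Qed.

Lemma natF_eq0 n : (n%:R == 0 :> F) = (p %| n)%N.
Proof. by rewrite (dvdn_pcharf (pchar_Fp hp)). Qed.

Lemma podd : odd p.
Proof. by case/even_prime: hp hp5 => [->//|//]. Qed.

Lemma kk2 : (kk * 2 = p.-1)%N.
Proof.
have := podd; have h := odd_double_half p.-1; rewrite /kk.
case: p hp5 h => // n _ /=; rewrite -muln2 => h on; rewrite -[RHS]h.
by case: (odd n) on.
Qed.

Lemma fermatF (x : F) : x != 0 -> x ^+ p.-1 = 1.
Proof.
move=> x0; have h := expf_card x; rewrite cardF in h.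
have h2 : x ^+ p = x * x ^+ p.-1 by rewrite -exprS prednK // prime_gt0.
by apply: (mulfI x0); rewrite -h2 h mulr1.
Qed.

Lemma kk_gt0 : (0 < kk)%N.
Proof. have := kk2; case: kk => //; rewrite mul0n => h; move: hp5; rewrite -(prednK (prime_gt0 hp)) -h. by []. Qed.

Lemma qr_pow (x : F) : x \in QR p -> x ^+ kk = 1.
Proof.
rewrite inE => /andP[x0 /existsP[y /eqP hy]].
have y0 : y != 0 by apply: contraNneq x0 => e; rewrite -hy e expr0n.
by rewrite -hy -exprM mulnC kk2 fermatF.
Qed.

Lemma pow_pm1 (x : F) : x != 0 -> (x ^+ kk == 1) || (x ^+ kk == -1).
Proof.
by move=> x0; rewrite -sqrf_eq1 -exprM kk2 fermatF.
Qed.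

Lemma card_QR : (kk <= #|QR p|)%N.
Proof.
have e1 : #|[set y : F | y != 0]| = p.-1.
  have -> : [set y : F | y != 0] = [set~ 0] by apply/setP=> y; rewrite !inE.
  by rewrite cardsC1 cardF.
have : (p.-1 <= 2 * #|QR p|)%N.
  rewrite -e1 -sum1_card (partition_big (fun y : F => y ^+ 2) (fun x => x \in QR p)) /=.
    rewrite -sum1_card big_distrr /=; apply: leq_sum => x _.
    rewrite muln1 sum1_card.
    case: (pickP [pred y : F | (y \in [set y | y != 0]) && (y ^+ 2 == x)]) => [y0 /= /andP[_ /eqP hy0]|h0].
      apply: leq_trans (_ : #|[set y0; - y0]| <= 2)%N; last by rewrite cards2; case: (_ != _).
      apply: subset_leq_card; apply/subsetP => y; rewrite !inE => /andP[_ /eqP hy].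
      by rewrite -eqf_sqr hy hy0.
    by rewrite (eq_card0 h0).
  move=> y; rewrite !inE => y0; apply/andP; split; first by rewrite expf_neq0.
  by apply/existsP; exists y.
rewrite -kk2 mulnC leq_pmul2l //.
Qed.

Lemma pow_qr (x : F) : x ^+ kk = 1 -> x \in QR p.
Proof.
move=> hx.
have sub : QR p \subset [set x : F | x ^+ kk == 1].
  by apply/subsetP => y /qr_pow; rewrite inE => ->.
have le : (#|[set x : F | x ^+ kk == 1%R]| <= kk)%N.
  rewrite cardE; apply: max_unity_roots; first exact: kk_gt0.
    by apply/allP => y; rewrite mem_enum inE unity_rootE.
  exact: enum_uniq.
have eqS : QR p = [set x : F | x ^+ kk == 1].
  apply/eqP; rewrite eqEcard sub /=; apply: leq_trans le card_QR.
by rewrite eqS inE hx.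
Qed.

Lemma m1n1 : (-1 : F) != 1.
Proof.
rewrite -subr_eq0 -opprD oppr_eq0 -(natrD F 1 1) natF_eq0.
by apply/negP => /(dvdn_leq (isT : (0 < 2)%N)); move: hp5; lia.
Qed.

Definition chi (x : F) : int := if x == 0 then 0 else if x ^+ kk == 1 then 1 else -1.

Lemma chi0 : chi 0 = 0. Proof. by rewrite /chi eqxx. Qed.

Lemma chi_qr x : x \in QR p -> chi x = 1.
Proof.
move=> h; have := qr_pow x h; rewrite /chi => ->; rewrite eqxx.
by move: h; rewrite inE => /andP[/negPf -> _].
Qed.

Lemma chi_nqr x : x != 0 -> x \notin QR p -> chi x = -1.
Proof.
move=> x0 h; rewrite /chi (negPf x0); case: ifP => // /eqP /pow_qr.
by rewrite (negPf h).
Qed.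

Lemma chi1E x : (chi x == 1) = (x \in QR p).
Proof.
case: (boolP (x \in QR p)) => [/chi_qr -> //| h].
case: (eqVneq x 0) => [->|x0]; first by rewrite chi0.
by rewrite chi_nqr.
Qed.

Lemma chi_sq x : x != 0 -> chi x * chi x = 1.
Proof.
move=> x0; case: (boolP (x \in QR p)) => h; first by rewrite chi_qr.
by rewrite chi_nqr.
Qed.

Lemma chiM x y : chi (x * y) = chi x * chi y.
Proof.
case: (eqVneq x 0) => [->|x0]; first by rewrite mul0r chi0 mul0r.
case: (eqVneq y 0) => [->|y0]; first by rewrite mulr0 chi0 mulr0.
rewrite /chi mulf_eq0 (negPf x0) (negPf y0) /= exprMn.
have nm := m1n1; have nm' : (1 : F) != -1 by rewrite eq_sym.
case/orP: (pow_pm1 x x0) => /eqP ->; case/orP: (pow_pm1 y y0) => /eqP ->;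
  rewrite ?mulr1 ?mul1r ?mulrNN ?mulr1 ?eqxx ?(negPf nm) //.
Qed.

Lemma chi_abs x : `|chi x| <= 1.
Proof. by rewrite /chi; case: ifP => //; case: ifP. Qed.

Lemma sum_chi_lin (n a b : F) : n != 0 -> chi n = -1 -> a != 0 ->
  \sum_(x : F) chi (a * x + b) = 0.
Proof.
move=> n0 hn a0.
have inj : injective (fun x : F => a * x + b).
  by move=> x y /addIr /(mulfI a0).
have -> : \sum_(x : F) chi (a * x + b) = \sum_(x : F) chi x.
  by rewrite [RHS](reindex_inj inj).
have e : \sum_(x : F) chi x = - \sum_(x : F) chi x.
  rewrite {1}(reindex_inj (mulfI n0)) /=.
  by rewrite -mulN1r big_distrr /=; apply: eq_bigr => x _; rewrite chiM hn.
by move/eqP: e; rewrite -subr_eq0 opprK -mulr2n mulrn_eq0 /= => /eqP.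
Qed.

Lemma jacobi (n c : F) : n != 0 -> chi n = -1 -> c != 0 ->
  \sum_(x : F) chi x * chi (x + c) = -1.
Proof.
move=> n0 hn c0.
rewrite (reindex_inj (@invr_inj F)) /= (bigD1 0) //= invr0 chi0 mul0r add0r.
have z := sum_chi_lin n c 1 n0 hn c0; rewrite (bigD1 0) //= mulr0 add0r in z.
have chi1 : chi 1 = 1 by apply: chi_qr; rewrite inE oner_neq0 /=; apply/existsP; exists 1; rewrite expr1n.
rewrite chi1 in z.
have -> : \sum_(i | i != 0) chi i^-1 * chi (i^-1 + c) = \sum_(i | i != 0) chi (c * i + 1).
  apply: eq_bigr => t t0.
  by rewrite -chiM (@inv_id _ c t t0); rewrite !chiM chi_sq ?mul1r // invr_eq0.
move: z; set S := (X in 1 + X = 0) => z.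
have -> : \sum_(i | i != 0) chi (c * i + 1) = S by [].
by move: z; lia.
Qed.

Lemma jacobi2 (n a b : F) : n != 0 -> chi n = -1 -> a != b ->
  \sum_(x : F) chi (x - a) * chi (x - b) = -1.
Proof.
move=> n0 hn ab.
rewrite (reindex_inj (addIr a)) /=.
rewrite -(jacobi n (a - b) n0 hn) ?subr_eq0 //.
by apply: eq_bigr => x _; rewrite addrK addrA.
Qed.

Lemma chi_pm x : x != 0 -> chi x = 1 \/ chi x = -1.
Proof. by move=> x0; rewrite /chi (negPf x0); case: ifP; [left|right]. Qed.

Lemma chi_sq_le x : chi x * chi x <= 1.
Proof. by rewrite /chi; case: ifP => //; case: ifP. Qed.

Lemma bil (n : F) (n0 : n != 0) (hn : chi n = -1) (Y : {set F}) :
  \sum_(u : F) (\sum_(y in Y) chi (u - y)) ^+ 2 <= p%:Z * #|Y|%:Z.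
Proof.
have e : \sum_(u : F) (\sum_(y in Y) chi (u - y)) ^+ 2 =
   \sum_(y in Y) \sum_(y' in Y) \sum_(u : F) chi (u - y) * chi (u - y').
  rewrite (eq_bigr (fun u => \sum_(y in Y) \sum_(y' in Y) chi (u - y) * chi (u - y'))); last first.
    by move=> u _; rewrite expr2 mulr_suml; apply: eq_bigr => y _; rewrite mulr_sumr.
  rewrite exchange_big /=; apply: eq_bigr => y _; by rewrite exchange_big.
rewrite e.
apply: le_trans (_ : \sum_(y in Y) \sum_(y' in Y) (if y' == y then p%:Z else 0) <= _).
  apply: ler_sum => y _; apply: ler_sum => y' _.
  case: eqP => [->|/eqP ne].
    apply: le_trans (_ : \sum_(u : F) (1 : int) <= _).
      by apply: ler_sum => u _; apply: chi_sq_le.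
    by rewrite sumr_const card_ord Fp_cast // natz.
  by rewrite (jacobi2 _ _ _ n0 hn) // eq_sym.
apply: le_trans (_ : \sum_(y in Y) p%:Z <= _).
  apply: ler_sum => y yY; rewrite (bigD1 y) //= eqxx big1 ?addr0 //.
  by move=> y' /andP[_ /negPf ->].
by rewrite sumr_const -mulr_natr natz.
Qed.

Lemma two_nz : (2%:R : F) != 0.
Proof. rewrite natF_eq0; apply/negP => /(dvdn_leq (isT : (0 < 2)%N)); move: hp5; lia. Qed.

Lemma bilS (n : F) (n0 : n != 0) (hn : chi n = -1) (X Y : {set F}) :
  (\sum_(x in X) \sum_(y in Y) chi (2%:R * x - y)) ^+ 2 <= #|X|%:Z * (p%:Z * #|Y|%:Z).
Proof.
apply: le_trans (@cauchy_schwarz _ X (fun x => \sum_(y in Y) chi (2%:R * x - y))) _.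
apply: ler_wpM2l => //.
apply: le_trans (bil n n0 hn Y).
apply: le_trans (_ : \sum_(x : F) (\sum_(y in Y) chi (2%:R * x - y)) ^+ 2 <= _).
  rewrite [X in _ <= X](bigID (mem X)) /= lerDl.
  by apply: sumr_ge0 => x _; apply: sqr_ge0.
by rewrite [X in _ <= X](reindex_inj (mulfI two_nz)).
Qed.

Lemma card_QR_le : (#|QR p| <= kk)%N.
Proof.
have sub : QR p \subset [set x : F | x ^+ kk == 1].
  by apply/subsetP => y /qr_pow; rewrite inE => ->.
apply: leq_trans (subset_leq_card sub) _.
rewrite cardE; apply: max_unity_roots; first exact: kk_gt0.
  by apply/allP => y; rewrite mem_enum inE unity_rootE.
exact: enum_uniq.
Qed.

Lemma card_int (P : pred F) :
  (#|[set y | P y]|)%:Z = \sum_(y : F) (if P y then 1 else 0).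
Proof.
rewrite -sum1_card big_mkcond /= (big_morph Posz PoszD (erefl _)).
by apply: eq_bigr => y _; rewrite inE; case: (P y).
Qed.

Lemma sum1F : \sum_(y : F) (1 : int) = p%:Z.
Proof. by rewrite sumr_const card_ord Fp_cast // natz. Qed.

Hypothesis h2 : (2%:R : F) \notin QR p.
Hypothesis hm1 : (-1 : F) \in QR p.

Lemma chi2 : chi 2%:R = -1. Proof. exact: chi_nqr two_nz h2. Qed.
Lemma chim1 : chi (-1) = 1. Proof. exact: chi_qr. Qed.

Lemma sum_chi (a b : F) : a != 0 -> \sum_(x : F) chi (a * x + b) = 0.
Proof. exact: sum_chi_lin two_nz chi2. Qed.

Lemma jac (a b : F) : a != b -> \sum_(x : F) chi (x - a) * chi (x - b) = -1.
Proof. exact: jacobi2 two_nz chi2. Qed.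

Lemma out_count (c : F) : chi c = -1 ->
  4 * (#|[set y : F | (y \in QR p) && (c - y \in QR p)]|)%:Z = p%:Z - 1.
Proof.
move=> hc.
have c0 : c != 0 by apply: contra_eqN hc => /eqP ->; rewrite chi0.
rewrite card_int mulr_sumr.
rewrite (eq_bigr (fun y => 1 + chi (1 * y + 0) + chi ((-1) * y + c) + chi (y - 0) * chi (y - c))); last first.
  move=> y _.
  have e : chi (c - y) = chi (y - c).
    have -> : c - y = -1 * (y - c) by rewrite mulN1r opprB.
    by rewrite chiM chim1 mul1r.
  rewrite mul1r addr0 mulN1r [- y + c]addrC subr0 e -!chi1E.
  case: (eqVneq y 0) => [->|y0].
    have hc' : chi (- c) = -1 by rewrite -[- c]mulN1r chiM chim1 mul1r.
    by rewrite chi0 sub0r hc' /=; lia.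
  case: (eqVneq y c) => [->|yc]; first by rewrite subrr chi0 hc /=; lia.
  have yc' : y - c != 0 by rewrite subr_eq0.
  rewrite e.
  by case: (chi_pm y y0) => ->; case: (chi_pm _ yc') => ->.
rewrite !big_split /= sum1F !sum_chi ?oner_neq0 ?oppr_eq0 ?oner_neq0 // jac 1?eq_sym //.
by rewrite !addr0; lia.
Qed.

Lemma in_count (y : F) : chi y = 1 ->
  4 * (#|[set x : F | (x \in QR p) && (2%:R * x - y \in QR p)]|)%:Z = p%:Z - 1.
Proof.
move=> hy.
have y0 : y != 0 by apply: contra_eqN hy => /eqP ->; rewrite chi0.
have hy' : chi (- y) = 1 by rewrite -[- y]mulN1r chiM chim1 mul1r.
rewrite card_int mulr_sumr.
rewrite (eq_bigr (fun x => 1 + chi (1 * x + 0) + chi (2%:R * x + (- y)) + chi x * chi (2%:R * x - y)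
                          - (if x == 0 then 2 else 0))); last first.
  move=> x _; rewrite mul1r addr0 -!chi1E.
  case: (eqVneq x 0) => [->|x0]; first by rewrite chi0 /= !mulr0 sub0r hy' mul0r; lia.
  case: (eqVneq (2%:R * x - y) 0) => [z0|z0].
    have hx : chi x = -1.
      move/eqP: (z0); rewrite subr_eq0 => /eqP e.
      by have := chiM 2%:R x; rewrite e chi2 hy; lia.
    by rewrite z0 hx chi0 /=; lia.
  by case: (chi_pm x x0) => ->; case: (chi_pm _ z0) => ->.
rewrite sumrB !big_split /= sum1F !sum_chi ?oner_neq0 ?two_nz //.
have -> : \sum_(x : F) chi x * chi (2%:R * x - y) = 1.
  have e : forall x : F, chi x * chi (2%:R * x - y) = - (chi (x - 0) * chi (x - y / 2%:R)).
    move=> x; have -> : 2%:R * x - y = 2%:R * (x - y / 2%:R).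
      by rewrite mulrBr [2%:R * (y / _)]mulrC divfK // two_nz.
    by rewrite chiM chi2 subr0; lia.
  rewrite (eq_bigr _ (fun x _ => e x)) sumrN jac ?opprK //.
  by rewrite eq_sym mulf_neq0 // invr_eq0 two_nz.
have -> : \sum_(x : F) (if x == 0 then (2 : int) else 0) = 2.
  by rewrite (bigD1 0) //= big1 ?addr0 // => x /negPf ->.
by rewrite !addr0; lia.
Qed.

Lemma half (a z : F) : 2%:R * a = z -> a = z / 2%:R.
Proof. by move=> <-; rewrite [2%:R * a]mulrC mulfK // two_nz. Qed.

Lemma card4 (a b c d : F) :
  (#|[set a; b] :|: [set c; d]| <= 4)%N.
Proof.
apply: leq_trans (leq_card_setU _ _) _.
by rewrite !cards2; case: (a != b); case: (c != d).
Qed.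

Lemma Rp_QR z : z \in Rp p -> z \in QR p.
Proof. by rewrite inE => /andP[]. Qed.

Lemma RpE z : z \in Rp p = (z \in QR p) && (z != 3%:R / 2%:R) && (z != - (3%:R / 2%:R)).
Proof. by rewrite !inE negb_or andbC andbA. Qed.

Lemma out_deg x : x \in Rp p ->
  p%:Z - 17 <= 4 * (#|[set y : F | (y \in Rp p) && (2%:R * x - y \in Rp p)]|)%:Z.
Proof.
move=> xR.
set h := (3%:R / 2%:R : F).
have hc : chi (2%:R * x) = -1 by rewrite chiM chi2 chi_qr ?Rp_QR // mulr1.
have := out_count _ hc.
set Q := [set y | _]; set O := [set y | _].
have sub : Q \subset O :|: ([set h; -h] :|: [set 2%:R * x - h; 2%:R * x + h]).
  apply/subsetP => y; rewrite !inE -/h => /andP[/andP[y0 qy] /andP[c0 qc]].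
  rewrite y0 qy c0 qc /= ?andbT.
  case: (eqVneq y h) => [->|yh]; first by rewrite /= ?orbT.
  case: (eqVneq y (- h)) => [->|yh']; first by rewrite /= ?orbT.
  case: (eqVneq (2%:R * x - y) h) => [e|e1].
    have -> : y == 2%:R * x - h by apply/eqP; rewrite -e opprB addrC subrK.
    by rewrite !orbT.
  case: (eqVneq (2%:R * x - y) (- h)) => [e|e2].
    have -> : y == 2%:R * x + h by apply/eqP; rewrite -[h]opprK -e opprB addrC subrK.
    by rewrite !orbT.
  by [].
have le := subset_leq_card sub.
have le2 := leq_trans le (leq_card_setU _ _).
have le3 := card4 h (-h) (2%:R * x - h) (2%:R * x + h).
have le4 : (#|Q| <= #|O| + 4)%N by apply: leq_trans le2 _; rewrite leq_add2l.
move=> e; move: le4 e; clear; lia.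
Qed.

Lemma in_deg y : y \in Rp p ->
  p%:Z - 17 <= 4 * (#|[set x : F | (x \in Rp p) && (2%:R * x - y \in Rp p)]|)%:Z.
Proof.
move=> yR.
set h := (3%:R / 2%:R : F).
have := in_count _ (chi_qr _ (Rp_QR _ yR)).
set Q := [set x | _]; set O := [set x | _].
have sub : Q \subset O :|: ([set h; -h] :|: [set (y + h) / 2%:R; (y - h) / 2%:R]).
  apply/subsetP => x; rewrite !inE -/h => /andP[/andP[x0 qx] /andP[c0 qc]].
  rewrite x0 qx c0 qc /= ?andbT.
  case: (eqVneq x h) => [->|xh]; first by rewrite /= ?orbT.
  case: (eqVneq x (- h)) => [->|xh']; first by rewrite /= ?orbT.
  case: (eqVneq (2%:R * x - y) h) => [e|e1].
    have : 2%:R * x = y + h by rewrite -e addrC subrK.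
    by move/half => ->; rewrite eqxx !orbT.
  case: (eqVneq (2%:R * x - y) (- h)) => [e|e2].
    have : 2%:R * x = y - h by rewrite -e addrC subrK.
    by move/half => ->; rewrite eqxx !orbT.
  by [].
have le := subset_leq_card sub.
have le2 := leq_trans le (leq_card_setU _ _).
have le3 := card4 h (-h) ((y + h) / 2%:R) ((y - h) / 2%:R).
have le4 : (#|Q| <= #|O| + 4)%N by apply: leq_trans le2 _; rewrite leq_add2l.
move=> e; move: le4 e; clear; lia.
Qed.

Definition ind (b : bool) : int := if b then 1 else 0.

Lemma card_in (X : {set F}) (P : pred F) :
  (#|[set y in X | P y]|)%:Z = \sum_(y in X) ind (P y).
Proof.
rewrite card_int [RHS]big_mkcond /=; apply: eq_bigr => y _.
by rewrite /ind; case: (y \in X); case: (P y).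
Qed.

Lemma ind_le z : 2 * ind (chi z == 1) <= 1 + chi z.
Proof. by rewrite /ind /chi; case: (z == 0); case: (z ^+ kk == 1). Qed.

Lemma key (X : {set F}) :
  (0 < #|X|)%N ->
  #|X|%:Z * (p%:Z - 17) <= 4 * \sum_(x in X) \sum_(y in X) ind (chi (2%:R * x - y) == 1) ->
  (p%:Z - 17 - 2 * #|X|%:Z <= 0) \/ ((p%:Z - 17 - 2 * #|X|%:Z) ^+ 2 <= 4 * p%:Z).
Proof.
move=> a0 hM.
set M := \sum_(x in X) _ in hM.
set S := \sum_(x in X) \sum_(y in X) chi (2%:R * x - y).
have h1 : 2 * M <= #|X|%:Z * #|X|%:Z + S.
  rewrite /M /S mulr_sumr.
  apply: le_trans (_ : \sum_(x in X) \sum_(y in X) (1 + chi (2%:R * x - y)) <= _).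
    by apply: ler_sum => x _; rewrite mulr_sumr; apply: ler_sum => y _; exact: ind_le.
  have e : forall x, \sum_(y in X) (1 + chi (2%:R * x - y)) = #|X|%:Z + \sum_(y in X) chi (2%:R * x - y).
    by move=> x; rewrite big_split /= sumr_const (natz #|X|).
  rewrite (eq_bigr _ (fun x _ => e x)).
  by rewrite big_split /= sumr_const pmulrn mulrzz.
have h2' := bilS _ two_nz chi2 X X.
rewrite -/S in h2'.
set a := #|X|%:Z in hM h1 h2' *.
have apos : 0 < a by rewrite /a ltz_nat.
set q := p%:Z in hM h2' *.
case: (lerP (q - 17 - 2 * a) 0) => [l|l]; [by left | right].
have h3 : a * (q - 17 - 2 * a) <= 2 * S by lia.
have h4 : (a * (q - 17 - 2 * a)) ^+ 2 <= (2 * S) ^+ 2.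
  by rewrite ler_pXn2r // ?nnegrE; nia.
have h5 : a ^+ 2 * (q - 17 - 2 * a) ^+ 2 <= a ^+ 2 * (4 * q).
  rewrite -exprMn; apply: le_trans h4 _; rewrite exprMn; move: h2'; rewrite !expr2; nia.
by rewrite ler_pM2l ?exprn_gt0 in h5.
Qed.

Lemma sum_const_int (X : {set F}) (c : int) : \sum_(x in X) c = #|X|%:Z * c.
Proof. by rewrite sumr_const pmulrn mulrzz mulrC. Qed.

Lemma out_closed (X : {set F}) : X != set0 ->
  (forall x y, x \in X -> y \in Rp p -> 2%:R * x - y \in Rp p -> y \in X) ->
  (forall x, x \in X -> x \in Rp p) ->
  (p%:Z - 17 - 2 * #|X|%:Z <= 0) \/ ((p%:Z - 17 - 2 * #|X|%:Z) ^+ 2 <= 4 * p%:Z).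
Proof.
move=> ne cl sub; apply: key; first by rewrite card_gt0.
rewrite -sum_const_int mulr_sumr; apply: ler_sum => x xX.
apply: le_trans (out_deg x (sub x xX)) _.
rewrite ler_pM2l // -card_in lez_nat; apply: subset_leq_card.
apply/subsetP => y; rewrite in_set => /andP[yR cR].
rewrite in_set (cl x y xX yR cR) /=; apply/eqP; apply: chi_qr; exact: Rp_QR.
Qed.

Lemma in_closed (X : {set F}) : X != set0 ->
  (forall x y, y \in X -> x \in Rp p -> 2%:R * x - y \in Rp p -> x \in X) ->
  (forall x, x \in X -> x \in Rp p) ->
  (p%:Z - 17 - 2 * #|X|%:Z <= 0) \/ ((p%:Z - 17 - 2 * #|X|%:Z) ^+ 2 <= 4 * p%:Z).
Proof.
move=> ne cl sub; apply: key; first by rewrite card_gt0.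
rewrite exchange_big /=.
rewrite -sum_const_int mulr_sumr; apply: ler_sum => y yX.
apply: le_trans (in_deg y (sub y yX)) _.
rewrite ler_pM2l // -card_in lez_nat; apply: subset_leq_card.
apply/subsetP => x; rewrite in_set => /andP[xR cR].
rewrite in_set (cl x y yX xR cR) /=; apply/eqP; apply: chi_qr; exact: Rp_QR.
Qed.

Lemma edge x y : x \in Rp p -> y \in Rp p -> 2%:R * x - y \in Rp p -> Dedge p x y.
Proof.
move=> xR yR cR; rewrite /Dedge xR yR /=.
apply/existsP; exists (2%:R * x - y); rewrite cR /=.
rewrite addrC subrK eqxx /=.
apply/orP; left; apply/negP => /eqP /half e.
by move: xR; rewrite RpE e eqxx /= andbF.
Qed.

Hypothesis hbig : (1711 <= p)%N.

Lemma sc : strongly_connected_D p.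
Proof.
move=> u v uR vR; apply/idPn => nc.
set A := [set w in Rp p | connect (Dedge p) u w].
set B := Rp p :\: A.
have uA : u \in A by rewrite inE uR connect0.
have vB : v \in B by rewrite in_setD vR andbT in_set vR.
have subA : forall x, x \in A -> x \in Rp p by move=> x; rewrite in_set => /andP[].
have subB : forall x, x \in B -> x \in Rp p by move=> x; rewrite in_setD => /andP[].
have neA : A != set0 by apply/set0Pn; exists u.
have neB : B != set0 by apply/set0Pn; exists v.
have hA := @out_closed A neA.
have hB := @in_closed B neB.
have clA : forall x y, x \in A -> y \in Rp p -> 2%:R * x - y \in Rp p -> y \in A.
  move=> x y; rewrite in_set => /andP[xR cx] yR cR.
  by rewrite in_set yR (connect_trans cx (connect1 (edge _ _ xR yR cR))).
have clB : forall x y, y \in B -> x \in Rp p -> 2%:R * x - y \in Rp p -> x \in B.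
  move=> x y; rewrite [y \in B]in_setD => /andP[yA yR] xR cR; rewrite [x \in B]in_setD xR andbT.
  apply: contra yA => xA; exact: clA xA yR cR.
move: (hA clA subA) (hB clB subB) => {hA hB} hA hB.
have cardAB : (#|A| + #|B| = #|Rp p|)%N.
  have e : Rp p :&: A = A by apply/setIidPr/subsetP => x /subA.
  by rewrite -(cardsID A (Rp p)) e.
have cR : (#|Rp p| <= #|QR p|)%N by apply: subset_leq_card; apply: subsetDl.
have cQ := card_QR_le.
have k2 := kk2.
have pp : (p.-1.+1 = p)%N by rewrite prednK // prime_gt0.
move: hA hB cardAB cR cQ k2 pp hbig; clear.
set a := #|A|; set b := #|B|; set r := #|Rp p|; set q := #|QR p|.
move=> hA hB h1 h2 h3 h4 h5 h6.
have hab : (2 * (a + b) <= p)%N by lia.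
case: hA => hA; case: hB => hB; nia.
Qed.


End Chi.

Theorem lemma2p6 (p : nat) (hp : prime p) (hp1711 : (1711 <= p)%N)
  (hm1 : (-1 : 'F_p) \in QR p)
  (h2 : (2%:R : 'F_p) \notin QR p)
  (h3 : (3%:R : 'F_p) \notin QR p) :
  strongly_connected_D p.
Proof.
have hp5 : (5 <= p)%N by apply: leq_trans hp1711.
exact: (@sc p hp hp5 h2 hm1 hp1711).
Qed.
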